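(* Let $X\subset\mathbb{R}^2$ be a set in convex position. Then $$\mathcal{M}_X=\bigcap\{\mathcal{M}_Y : Y\subset X,\ \#Y=3\}.$$
   Context: A set $S\subset\mathbb{R}^2$ is in convex position if every point of $S$ lies on the boundary of $\mathrm{conv}(S)$. For a point set $X\subset\mathbb{R}^2$ and a point $O$, $X_O=2O-X$ is the reflection of $X$ in $O$. The point $O$ is an admissible center for $X$ if $X\cup X_O$ is in convex position; $\mathcal{M}_X$ denotes the set of all admissible centers for $X$. (Note $X$ is in c.s.c. position, i.e. contained in the boundary of a centrally symmetric convex body, iff $\mathcal{M}_X\neq\emptyset$.) *)

(* Defs.v *)
From Stdlib Require Import Reals List.
Open Scope R_scope.

Definition pt : Type := (R * R)%type.

Definition ptset : Type := pt -> Prop.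

Definition dist2 (p q : pt) : R :=
  (fst p - fst q) * (fst p - fst q) + (snd p - snd q) * (snd p - snd q).

(* convex hull: the set of all finite convex combinations of points of S *)
Definition wsum (l : list (R * pt)) : pt :=
  fold_right (fun wx acc => (fst acc + fst wx * fst (snd wx),
                             snd acc + fst wx * snd (snd wx))) (0, 0) l.
Definition wtotal (l : list (R * pt)) : R :=
  fold_right (fun wx acc => acc + fst wx) 0 l.

Definition conv (S : ptset) : ptset := fun p =>
  exists l : list (R * pt),
    Forall (fun wx => 0 <= fst wx /\ S (snd wx)) l /\
    wtotal l = 1 /\ p = wsum l.

Definition in_interior (A : ptset) (p : pt) : Prop :=
  exists e, 0 < e /\ forall q, dist2 p q < e * e -> A q.
Definition in_closure (A : ptset) (p : pt) : Prop :=
  forall e, 0 < e -> exists q, A q /\ dist2 p q < e * e.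
Definition on_boundary (A : ptset) (p : pt) : Prop :=
  in_closure A p /\ ~ in_interior A p.

Definition convex_position (S : ptset) : Prop :=
  forall p, S p -> on_boundary (conv S) p.

Definition refl_pt (O p : pt) : pt := (2 * fst O - fst p, 2 * snd O - snd p).
Definition refl_set (X : ptset) (O : pt) : ptset :=
  fun q => exists x, X x /\ q = refl_pt O x.

Definition set_union (A B : ptset) : ptset := fun p => A p \/ B p.

Definition admissible_center (X : ptset) (O : pt) : Prop :=
  convex_position (set_union X (refl_set X O)).
Definition M (X : ptset) : ptset := fun O => admissible_center X O.

Definition subset (Y X : ptset) : Prop := forall p, Y p -> X p.

Definition card3 (Y : ptset) : Prop :=
  exists a b c : pt, a <> b /\ a <> c /\ b <> c /\
    forall z, Y z <-> (z = a \/ z = b \/ z = c).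

(* Main.v *)
Require Import Defs.
From Stdlib Require Import Reals List Lra Psatz Classical.
Open Scope R_scope.

Definition dotd (u z p : pt) : R := fst u * (fst z - fst p) + snd u * (snd z - snd p).
Definition Surr (S : ptset) (p : pt) : Prop :=
  forall u : pt, u <> (0,0) -> exists s, S s /\ dotd u s p > 0.

Lemma nz_pos (u1 u2 : R) : (u1,u2) <> (0,0) -> u1*u1+u2*u2 > 0.
Proof.
  intro H. destruct (Req_dec u1 0) as [->|H1]; destruct (Req_dec u2 0) as [->|H2].
  - contradiction. - nra. - nra. - nra.
Qed.

Lemma wsum_cons w x l : wsum ((w,x)::l) = (fst (wsum l) + w * fst x, snd (wsum l) + w * snd x).
Proof. reflexivity. Qed.
Lemma wtotal_cons w x l : wtotal ((w,x)::l) = wtotal l + w.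
Proof. reflexivity. Qed.

Definition scale (k : R) (l : list (R * pt)) := map (fun wx => (k * fst wx, snd wx)) l.

Lemma wsum_scale k l : wsum (scale k l) = (k * fst (wsum l), k * snd (wsum l)).
Proof.
  induction l as [|[w x] l IH]; simpl.
  - f_equal; ring.
  - unfold wsum in *. simpl. rewrite IH. simpl. f_equal; ring.
Qed.

Lemma wtotal_scale k l : wtotal (scale k l) = k * wtotal l.
Proof.
  induction l as [|[w x] l IH]; simpl.
  - ring.
  - unfold wtotal in *. simpl. rewrite IH. ring.
Qed.

Lemma wsum_app l1 l2 : wsum (l1 ++ l2) =
  (fst (wsum l1) + fst (wsum l2), snd (wsum l1) + snd (wsum l2)).
Proof.
  induction l1 as [|[w x] l IH]; simpl.
  - destruct (wsum l2); simpl; f_equal; ring.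
  - unfold wsum in *. simpl. rewrite IH. simpl. f_equal; ring.
Qed.

Lemma wtotal_app l1 l2 : wtotal (l1 ++ l2) = wtotal l1 + wtotal l2.
Proof.
  induction l1 as [|[w x] l IH]; simpl.
  - ring.
  - unfold wtotal in *. simpl. rewrite IH. ring.
Qed.

Lemma conv_idem (S : ptset) (L : list (R * pt)) :
  Forall (fun wx => 0 <= fst wx /\ conv S (snd wx)) L ->
  exists l, Forall (fun wx => 0 <= fst wx /\ S (snd wx)) l /\
    wtotal l = wtotal L /\ wsum l = wsum L.
Proof.
  induction L as [|[w x] L IH]; intro HF.
  - exists nil. repeat split; auto.
  - inversion HF as [|? ? [Hw [lx [Hlx [Htx Hx]]]] HF']; subst.
    destruct (IH HF') as [l' [Hl' [Ht' Hs']]].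
    exists (scale w lx ++ l'). split; [|split].
    + apply Forall_app; split; auto.
      unfold scale. apply Forall_map. eapply Forall_impl; [|exact Hlx].
      intros [a b] [Ha Hb]; simpl in *; split; auto. apply Rmult_le_pos; auto.
    + rewrite wtotal_app, wtotal_scale, wtotal_cons, Htx, Ht'. ring.
    + simpl in Hx. rewrite wsum_app, wsum_scale, wsum_cons, Hs', Hx. simpl. f_equal; ring.
Qed.

Lemma conv_of_conv (S : ptset) (L : list (R * pt)) :
  Forall (fun wx => 0 <= fst wx /\ conv S (snd wx)) L -> wtotal L = 1 -> conv S (wsum L).
Proof.
  intros HF Ht. destruct (conv_idem S L HF) as [l [Hl [Htl Hs]]].
  exists l. repeat split; auto. congruence.
Qed.

Lemma conv_S (S : ptset) x : S x -> conv S x.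
Proof.
  intro H. exists ((1,x)::nil). split; [constructor; [simpl; split; [lra|auto]|constructor]|].
  split; [simpl; ring|]. destruct x; simpl; f_equal; ring.
Qed.

Lemma conv_eq (S : ptset) p q : conv S p -> p = q -> conv S q.
Proof. intros; subst; auto. Qed.

Lemma conv_comb2 (S : ptset) a b t : conv S a -> conv S b -> 0 <= t <= 1 ->
  conv S (t * fst a + (1 - t) * fst b, t * snd a + (1 - t) * snd b).
Proof.
  intros Ha Hb Ht.
  apply conv_eq with (wsum ((t,a)::(1-t,b)::nil)).
  - apply conv_of_conv.
    + constructor; [simpl; split; [lra|auto]|].
      constructor; [simpl; split; [lra|auto]|constructor].
    + simpl. ring.
  - simpl. f_equal; ring.
Qed.

Lemma dot_wsum_le (S : ptset) u p l :
  (forall s, S s -> dotd u s p <= 0) ->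
  Forall (fun wx => 0 <= fst wx /\ S (snd wx)) l ->
  fst u * fst (wsum l) + snd u * snd (wsum l) <= wtotal l * (fst u * fst p + snd u * snd p).
Proof.
  intros HS. induction l as [|[w x] l IH]; intro HF.
  - simpl. lra.
  - inversion HF as [|? ? [Hw Hx] HF']; subst. simpl in Hw, Hx.
    specialize (IH HF'). rewrite wsum_cons, wtotal_cons. simpl.
    assert (H := HS x Hx). unfold dotd in H.
    pose proof (Rmult_le_compat_l w _ 0 Hw H) as H'.
    lra.
Qed.

Lemma two_seg (S : ptset) (p a b c d : pt) th ph :
  conv S a -> conv S b -> conv S c -> conv S d -> 0 < th < 1 -> 0 < ph < 1 ->
  fst p = th * fst a + (1-th) * fst b -> snd p = th * snd a + (1-th) * snd b ->
  fst p = ph * fst c + (1-ph) * fst d -> snd p = ph * snd c + (1-ph) * snd d ->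
  (fst a - fst b) * (snd c - snd d) - (snd a - snd b) * (fst c - fst d) <> 0 ->
  in_interior (conv S) p.
Proof.
  intros Ha Hb Hc Hd Hth Hph E1 E2 E3 E4 HD.
  set (t := Rmin (Rmin th (1-th)) (Rmin ph (1-ph))).
  assert (Ht1 : t <= th /\ t <= 1 - th /\ t <= ph /\ t <= 1 - ph).
  { unfold t. repeat split.
    - eapply Rle_trans; [apply Rmin_l|apply Rmin_l].
    - eapply Rle_trans; [apply Rmin_l|apply Rmin_r].
    - eapply Rle_trans; [apply Rmin_r|apply Rmin_l].
    - eapply Rle_trans; [apply Rmin_r|apply Rmin_r]. }
  assert (Ht0 : 0 < t).
  { unfold t. repeat apply Rmin_glb_lt; lra. }
  destruct p as [p1 p2], a as [a1 a2], b as [b1 b2], c as [c1 c2], d as [d1 d2].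
  simpl in *.
  set (v1 := a1 - b1). set (v2 := a2 - b2). set (w1 := c1 - d1). set (w2 := c2 - d2).
  set (D := v1 * w2 - v2 * w1). fold v1 v2 w1 w2 D in HD.
  assert (P1 : conv S (p1 + t*v1, p2 + t*v2)).
  { eapply conv_eq. apply (conv_comb2 S _ _ (th + t) Ha Hb). lra.
    simpl. unfold v1, v2. f_equal; lra. }
  assert (P2 : conv S (p1 - t*v1, p2 - t*v2)).
  { eapply conv_eq. apply (conv_comb2 S _ _ (th - t) Ha Hb). lra.
    simpl. unfold v1, v2. f_equal; lra. }
  assert (P3 : conv S (p1 + t*w1, p2 + t*w2)).
  { eapply conv_eq. apply (conv_comb2 S _ _ (ph + t) Hc Hd). lra.
    simpl. unfold w1, w2. f_equal; lra. }
  assert (P4 : conv S (p1 - t*w1, p2 - t*w2)).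
  { eapply conv_eq. apply (conv_comb2 S _ _ (ph - t) Hc Hd). lra.
    simpl. unfold w1, w2. f_equal; lra. }
  assert (P0 : conv S (p1, p2)).
  { eapply conv_eq. apply (conv_comb2 S _ _ th Ha Hb). lra.
    simpl. f_equal; lra. }
  set (K := 1 + v1*v1 + v2*v2 + w1*w1 + w2*w2).
  assert (HK : 1 <= K) by (unfold K; nra).
  assert (HDa : 0 < Rabs D) by (apply Rabs_pos_lt; auto).
  exists (t * Rabs D / (4 * K)). split.
  { apply Rdiv_lt_0_compat; nra. }
  intros [q1 q2] Hq. unfold dist2 in Hq. simpl in Hq.
  set (e := t * Rabs D / (4 * K)) in *.
  assert (He2 : e * e * (16 * (K*K)) = t*t*(D*D)).
  { unfold e. replace (D*D) with (Rabs D * Rabs D).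
    - field. lra.
    - rewrite <- Rabs_mult. apply Rabs_pos_eq. nra. }
  set (z1 := q1 - p1). set (z2 := q2 - p2).
  assert (Hz : z1*z1 + z2*z2 < e*e).
  { assert (z1*z1+z2*z2 = (p1-q1)*(p1-q1) + (p2-q2)*(p2-q2)) by (unfold z1, z2; ring). lra. }
  set (al := (z1 * w2 - z2 * w1) / D).
  set (be := (v1 * z2 - v2 * z1) / D).
  assert (Hal : al * D = z1 * w2 - z2 * w1) by (unfold al; field; auto).
  assert (Hbe : be * D = v1 * z2 - v2 * z1) by (unfold be; field; auto).
  assert (Hdec1 : al * v1 + be * w1 = z1).
  { apply (Rmult_eq_reg_r D); auto. rewrite Rmult_plus_distr_r.
    replace (al * v1 * D) with (al * D * v1) by ring.
    replace (be * w1 * D) with (be * D * w1) by ring.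
    rewrite Hal, Hbe. unfold D. ring. }
  assert (Hdec2 : al * v2 + be * w2 = z2).
  { apply (Rmult_eq_reg_r D); auto. rewrite Rmult_plus_distr_r.
    replace (al * v2 * D) with (al * D * v2) by ring.
    replace (be * w2 * D) with (be * D * w2) by ring.
    rewrite Hal, Hbe. unfold D. ring. }
  assert (HDD : 0 < D * D) by nra.
  assert (Bal : al * al < t * t / 16).
  { assert (H1 : (z1 * w2 - z2 * w1) * (z1 * w2 - z2 * w1) <= (z1*z1+z2*z2) * (w1*w1+w2*w2)).
    { assert (H0: (z1 * w2 - z2 * w1) * (z1 * w2 - z2 * w1) + (z1*w1+z2*w2)*(z1*w1+z2*w2)
               = (z1*z1+z2*z2) * (w1*w1+w2*w2)) by ring.
      assert (0 <= (z1*w1+z2*w2)*(z1*w1+z2*w2)) by apply Rle_0_sqr. lra. }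
    assert (HW : w1*w1+w2*w2 <= K*K) by (unfold K; nra).
    assert (H2 : (z1*z1+z2*z2) * (w1*w1+w2*w2) <= e*e*(K*K)).
    { apply Rmult_le_compat; nra. }
    assert (H3 : al*al*(D*D) * 16 < t*t*(D*D)).
    { replace (al*al*(D*D)) with ((al*D)*(al*D)) by ring. rewrite Hal.
      assert (e*e*(K*K) * 16 <= t*t*(D*D)) by lra.
      assert (0 < e) by (unfold e; apply Rdiv_lt_0_compat; nra).
      assert (H4 : (z1*z1+z2*z2) * (w1*w1+w2*w2) < e*e*(K*K)).
      { destruct (Req_dec (w1*w1+w2*w2) 0) as [Hw0|Hw0].
        - rewrite Hw0, Rmult_0_r. apply Rmult_lt_0_compat; [|nra].
          assert (0 < t * Rabs D / (4 * K)) by (apply Rdiv_lt_0_compat; nra). fold e in H0. nra.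
        - assert (0 < w1*w1+w2*w2) by nra.
          apply Rle_lt_trans with (e*e*(w1*w1+w2*w2)).
          + apply Rmult_le_compat_r; lra.
          + assert (w1*w1+w2*w2 < K*K) by (unfold K; nra). nra. }
      nra. }
    apply (Rmult_lt_reg_r (D*D * 16)); [nra|]. 
    replace (t * t / 16 * (D * D * 16)) with (t*t*(D*D)) by field. lra. }
  assert (Bbe : be * be < t * t / 16).
  { assert (H1 : (v1 * z2 - v2 * z1) * (v1 * z2 - v2 * z1) <= (z1*z1+z2*z2) * (v1*v1+v2*v2)).
    { assert (H0: (v1 * z2 - v2 * z1) * (v1 * z2 - v2 * z1) + (z1*v1+z2*v2)*(z1*v1+z2*v2)
               = (z1*z1+z2*z2) * (v1*v1+v2*v2)) by ring.
      assert (0 <= (z1*v1+z2*v2)*(z1*v1+z2*v2)) by apply Rle_0_sqr. lra. }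
    assert (H3 : be*be*(D*D) * 16 < t*t*(D*D)).
    { replace (be*be*(D*D)) with ((be*D)*(be*D)) by ring. rewrite Hbe.
      assert (e*e*(K*K) * 16 <= t*t*(D*D)) by lra.
      assert (H4 : (z1*z1+z2*z2) * (v1*v1+v2*v2) < e*e*(K*K)).
      { destruct (Req_dec (v1*v1+v2*v2) 0) as [Hw0|Hw0].
        - rewrite Hw0, Rmult_0_r. apply Rmult_lt_0_compat; [|nra].
          assert (0 < t * Rabs D / (4 * K)) by (apply Rdiv_lt_0_compat; nra). fold e in H0. nra.
        - assert (0 < v1*v1+v2*v2) by nra.
          apply Rle_lt_trans with (e*e*(v1*v1+v2*v2)).
          + apply Rmult_le_compat_r; lra.
          + assert (v1*v1+v2*v2 < K*K) by (unfold K; nra). nra. }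
      nra. }
    apply (Rmult_lt_reg_r (D*D * 16)); [nra|]. 
    replace (t * t / 16 * (D * D * 16)) with (t*t*(D*D)) by field. lra. }
  assert (Ral : - (t/4) <= al <= t/4) by (split; nra).
  assert (Rbe : - (t/4) <= be <= t/4) by (split; nra).
  set (x1 := 1/8 + al / (2*t)). set (x2 := 1/8 - al/(2*t)).
  set (y1 := 1/8 + be / (2*t)). set (y2 := 1/8 - be/(2*t)).
  assert (Hx1 : 0 <= x1).
  { unfold x1. apply Rle_trans with (1/8 + (-(t/4))/(2*t)).
    - right. field. lra.
    - apply Rplus_le_compat_l. apply Rmult_le_compat_r. 
      + left. apply Rinv_0_lt_compat. lra.
      + lra. }
  assert (Hx2 : 0 <= x2).
  { unfold x2. apply Rle_trans with (1/8 - (t/4)/(2*t)).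
    - right. field. lra.
    - unfold Rminus. apply Rplus_le_compat_l. apply Ropp_le_contravar.
      apply Rmult_le_compat_r. 
      + left. apply Rinv_0_lt_compat. lra.
      + lra. }
  assert (Hy1 : 0 <= y1).
  { unfold y1. apply Rle_trans with (1/8 + (-(t/4))/(2*t)).
    - right. field. lra.
    - apply Rplus_le_compat_l. apply Rmult_le_compat_r. 
      + left. apply Rinv_0_lt_compat. lra.
      + lra. }
  assert (Hy2 : 0 <= y2).
  { unfold y2. apply Rle_trans with (1/8 - (t/4)/(2*t)).
    - right. field. lra.
    - unfold Rminus. apply Rplus_le_compat_l. apply Ropp_le_contravar.
      apply Rmult_le_compat_r. 
      + left. apply Rinv_0_lt_compat. lra.
      + lra. }
  apply conv_eq with (wsum ((1/2, (p1,p2)) :: (x1, (p1 + t*v1, p2 + t*v2)) ::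
       (x2, (p1 - t*v1, p2 - t*v2)) :: (y1, (p1 + t*w1, p2 + t*w2)) ::
       (y2, (p1 - t*w1, p2 - t*w2)) :: nil)).
  - apply conv_of_conv.
    + repeat (constructor; [simpl; split; [lra|assumption]|]). constructor.
    + simpl. unfold x1, x2, y1, y2. field. lra.
  - simpl. unfold x1, x2, y1, y2.
    assert (q1 = p1 + (al * v1 + be * w1)) by (rewrite Hdec1; unfold z1; ring).
    assert (q2 = p2 + (al * v2 + be * w2)) by (rewrite Hdec2; unfold z2; ring).
    rewrite H, H0. f_equal; field; lra.
Qed.

Lemma interior_surr (S : ptset) p : in_interior (conv S) p -> Surr S p.
Proof.
  intros [e [He Hin]] [u1 u2] Hu.
  pose proof (nz_pos u1 u2 Hu) as HK.
  set (K := u1*u1+u2*u2) in *.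
  set (t := e / (1 + K)).
  assert (Ht : 0 < t) by (unfold t; apply Rdiv_lt_0_compat; lra).
  assert (Htk : t * (1 + K) = e) by (unfold t; field; lra).
  destruct (Hin (fst p + t*u1, snd p + t*u2)) as [l [Hl [Htl Hq]]].
  { unfold dist2; simpl.
    assert (t*t*K < e*e).
    { rewrite <- Htk. assert (0 < t*t) by nra. nra. }
    unfold K in H. nra. }
  apply NNPP. intro Hno.
  assert (HS : forall s, S s -> dotd (u1,u2) s p <= 0).
  { intros s Hs. apply Rnot_lt_le. intro Hc. apply Hno. exists s. split; auto. }
  pose proof (dot_wsum_le S (u1,u2) p l HS Hl) as H.
  rewrite Htl, <- Hq in H. simpl in H.
  assert (0 < t*K) by nra. unfold K in H0. nra.
Qed.

Lemma tri (S : ptset) (p sA sB sC : pt) lA lB lC :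
  S sA -> S sB -> S sC -> 0 < lA -> 0 < lB -> 0 < lC ->
  lA * (fst sA - fst p) + lB * (fst sB - fst p) + lC * (fst sC - fst p) = 0 ->
  lA * (snd sA - snd p) + lB * (snd sB - snd p) + lC * (snd sC - snd p) = 0 ->
  (fst sA - fst p) * (snd sB - snd p) - (snd sA - snd p) * (fst sB - fst p) <> 0 ->
  in_interior (conv S) p.
Proof.
  intros HA HB HC hA hB hC R1 R2 HD.
  destruct p as [p1 p2], sA as [a1 a2], sB as [b1 b2], sC as [c1 c2]. simpl in *.
  assert (Ec1 : c1 = p1 - (lA * (a1 - p1) + lB * (b1 - p1)) / lC).
  { apply (Rmult_eq_reg_l lC); [|lra]. field_simplify; [|lra]. lra. }
  assert (Ec2 : c2 = p2 - (lA * (a2 - p2) + lB * (b2 - p2)) / lC).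
  { apply (Rmult_eq_reg_l lC); [|lra]. field_simplify; [|lra]. lra. }
  set (tA := lB / (lB + lC)).
  set (tB := lA / (lA + lC)).
  assert (CA : conv S (tA * b1 + (1 - tA) * c1, tA * b2 + (1 - tA) * c2)).
  { apply (conv_comb2 S (b1,b2) (c1,c2) tA); try apply conv_S; auto. unfold tA. split.
    - left; apply Rdiv_lt_0_compat; lra.
    - apply (Rmult_le_reg_r (lB + lC)); [lra|]. field_simplify; lra. }
  assert (CB : conv S (tB * a1 + (1 - tB) * c1, tB * a2 + (1 - tB) * c2)).
  { apply (conv_comb2 S (a1,a2) (c1,c2) tB); try apply conv_S; auto. unfold tB. split.
    - left; apply Rdiv_lt_0_compat; lra.
    - apply (Rmult_le_reg_r (lA + lC)); [lra|]. field_simplify; lra. }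
  set (Sg := lA + lB + lC).
  apply (two_seg S (p1,p2) (a1,a2) (tA * b1 + (1 - tA) * c1, tA * b2 + (1 - tA) * c2)
                  (b1,b2) (tB * a1 + (1 - tB) * c1, tB * a2 + (1 - tB) * c2)
                  (lA / Sg) (lB / Sg)); simpl; try (apply conv_S; assumption); auto.
  - unfold Sg; split; [apply Rdiv_lt_0_compat; lra|].
    apply (Rmult_lt_reg_r (lA+lB+lC)); [lra|]. field_simplify; lra.
  - unfold Sg; split; [apply Rdiv_lt_0_compat; lra|].
    apply (Rmult_lt_reg_r (lA+lB+lC)); [lra|]. field_simplify; lra.
  - rewrite Ec1. unfold tA, Sg. field. lra.
  - rewrite Ec2. unfold tA, Sg. field. lra.
  - rewrite Ec1. unfold tB, Sg. field. lra.
  - rewrite Ec2. unfold tB, Sg. field. lra.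
  - rewrite Ec1, Ec2. unfold tA, tB.
    intro H0. apply HD.
    set (dA1 := a1 - p1) in *. set (dA2 := a2 - p2) in *.
    set (dB1 := b1 - p1) in *. set (dB2 := b2 - p2) in *.
    replace a1 with (p1 + dA1) in H0 by (unfold dA1; ring).
    replace a2 with (p2 + dA2) in H0 by (unfold dA2; ring).
    replace b1 with (p1 + dB1) in H0 by (unfold dB1; ring).
    replace b2 with (p2 + dB2) in H0 by (unfold dB2; ring).
    assert (E : (lA+lB+lC)*(lA+lB+lC) / ((lB+lC)*(lA+lC)) * (dA1 * dB2 - dA2 * dB1) = 0).
    { rewrite <- H0. field. lra. }
    apply Rmult_integral in E. destruct E as [E|E]; auto.
    exfalso. assert (0 < (lA+lB+lC)*(lA+lB+lC) / ((lB+lC)*(lA+lC))).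
    { apply Rdiv_lt_0_compat; nra. } lra.
Qed.

Lemma surr_int (S : ptset) (p : pt) : Surr S p -> in_interior (conv S) p.
Proof.
  intro HS.
  destruct (HS (1,0)) as [s1 [Hs1 H1]].
  { intro H; inversion H; lra. }
  unfold dotd in H1; simpl in H1.
  destruct p as [p1 p2].
  set (a1 := fst s1 - p1). set (a2 := snd s1 - p2).
  assert (Ha1 : 0 < a1) by (unfold a1; simpl in H1; lra).
  set (N := a1*a1 + a2*a2).
  assert (HN : 0 < N) by (unfold N; nra).
  set (A := fun s : pt => a1 * (fst s - p1) + a2 * (snd s - p2)).
  set (B := fun s : pt => - a2 * (fst s - p1) + a1 * (snd s - p2)).
  assert (HB : forall u, u = (-a2, a1) \/ u = (a2, -a1) -> u <> (0,0)).
  { intros u [->| ->] H; inversion H; lra. }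
  destruct (HS (-a2, a1)) as [sa [Hsa Ha]]; [apply HB; auto|].
  destruct (HS (a2, -a1)) as [sb [Hsb Hb]]; [apply HB; auto|].
  assert (HBa : B sa > 0) by (unfold B; unfold dotd in Ha; simpl in Ha; lra).
  assert (HBb : B sb < 0) by (unfold B; unfold dotd in Hb; simpl in Hb; lra).
  clear Ha Hb.
  destruct (classic (exists ta tb, S ta /\ S tb /\ B ta > 0 /\ B tb < 0 /\
                      (- B tb) * A ta + B ta * A tb < 0)) as [CT|nCT].
  {
    destruct CT as [ta [tb [Hta [Htb [Hba [Hbb HT]]]]]].
    set (T := (- B tb) * A ta + B ta * A tb) in *.
    apply (tri S (p1,p2) s1 ta tb (-T) ((- B tb) * N) (B ta * N)); auto; simpl.
    - lra. - nra. - nra.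
    - unfold T, A, B, N, a1, a2. ring.
    - unfold T, A, B, N, a1, a2. ring.
    - fold a1 a2. intro H0. assert (B ta = 0) by (unfold B; rewrite <- H0; unfold a1, a2; ring). lra. }
  assert (nT : forall ta tb, S ta -> S tb -> B ta > 0 -> B tb < 0 ->
                 0 <= (- B tb) * A ta + B ta * A tb).
  { intros ta tb ? ? ? ?. apply Rnot_lt_le. intro Hc. apply nCT. exists ta, tb. auto. }
  clear nCT.
  destruct (classic (exists s2, S s2 /\ B s2 = 0 /\ A s2 < 0)) as [CC|nCC].
  { destruct CC as [s2 [Hs2 [HB2 HA2]]].
    pose proof (nT sa sb Hsa Hsb HBa HBb) as HT.
    set (T := (- B sb) * A sa + B sa * A sb) in *.
    assert (I1 : N * (fst s2 - p1) = A s2 * a1 - B s2 * a2) by (unfold N, A, B; ring).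
    assert (I2 : N * (snd s2 - p2) = A s2 * a2 + B s2 * a1) by (unfold N, A, B; ring).
    rewrite HB2 in I1, I2.
    destruct (Rle_lt_or_eq_dec 0 T HT) as [HTp|HT0].
    -
      apply (tri S (p1,p2) s2 sa sb T (- A s2 * (- B sb)) (- A s2 * B sa)); auto; simpl.
      + nra. + nra.
      + apply (Rmult_eq_reg_l N); [|lra].
        assert (N * (T * (fst s2 - p1) + - A s2 * - B sb * (fst sa - p1) + - A s2 * B sa * (fst sb - p1))
                = T * (N * (fst s2 - p1)) - A s2 * a1 * T).
        { unfold T, A, B, N, a1, a2. ring. }
        rewrite H, I1. ring.
      + apply (Rmult_eq_reg_l N); [|lra].
        assert (N * (T * (snd s2 - p2) + - A s2 * - B sb * (snd sa - p2) + - A s2 * B sa * (snd sb - p2))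
                = T * (N * (snd s2 - p2)) - A s2 * a2 * T).
        { unfold T, A, B, N, a1, a2. ring. }
        rewrite H, I2. ring.
      + intro H0.
        assert (N * ((fst s2 - p1) * (snd sa - p2) - (snd s2 - p2) * (fst sa - p1))
                = A s2 * B sa - B s2 * A sa) by (unfold N, A, B; ring).
        rewrite H0, HB2 in H. nra.
    -
      symmetry in HT0.
      assert (J1 : - B sb * (fst sa - p1) + B sa * (fst sb - p1) = 0).
      { apply (Rmult_eq_reg_l N); [|lra].
        replace (N * 0) with (a1 * T) by (rewrite HT0; ring).
        unfold T, A, B, N, a1, a2. ring. }
      assert (J2 : - B sb * (snd sa - p2) + B sa * (snd sb - p2) = 0).
      { apply (Rmult_eq_reg_l N); [|lra].
        replace (N * 0) with (a2 * T) by (rewrite HT0; ring).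
        unfold T, A, B, N, a1, a2. ring. }
      set (A2 := A s2) in *.
      apply (two_seg S (p1,p2) s1 s2 sa sb (- A2 / (N - A2)) (- B sb / (B sa - B sb)));
        try (apply conv_S; assumption); simpl.
      + split; [apply Rdiv_lt_0_compat; lra|].
        apply (Rmult_lt_reg_r (N - A2)); [lra|]. field_simplify; lra.
      + split; [apply Rdiv_lt_0_compat; lra|].
        apply (Rmult_lt_reg_r (B sa - B sb)); [lra|]. field_simplify; lra.
      + apply (Rmult_eq_reg_l (N - A2)); [|lra]. field_simplify; [|lra].
        fold a1. replace (fst s1) with (p1 + a1) by (unfold a1; ring). lra.
      + apply (Rmult_eq_reg_l (N - A2)); [|lra]. field_simplify; [|lra].
        fold a2. replace (snd s1) with (p2 + a2) by (unfold a2; ring). lra.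
      + apply (Rmult_eq_reg_l (B sa - B sb)); [|lra]. field_simplify; [|lra]. lra.
      + apply (Rmult_eq_reg_l (B sa - B sb)); [|lra]. field_simplify; [|lra]. lra.
      + intro H0.
        assert (N * ((fst s1 - fst s2) * (snd sa - snd sb) - (snd s1 - snd s2) * (fst sa - fst sb))
                = (N - A s2) * (B sa - B sb) + B s2 * (A sa - A sb)) by (unfold N, A, B, a1, a2; ring).
        fold A2 in H. rewrite H0, HB2 in H. nra. }
  assert (nC : forall s, S s -> B s = 0 -> 0 <= A s).
  { intros s ? ?. apply Rnot_lt_le. intro Hc. apply nCC. exists s. auto. }
  clear nCC.
  exfalso.
  set (E := fun tau => exists t, S t /\ B t < 0 /\ tau = A t / B t).
  assert (UB : forall ta, S ta -> B ta > 0 -> forall tau, E tau -> tau <= A ta / B ta).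
  { intros ta Hta Hba tau [tb [Htb [Hbb ->]]].
    pose proof (nT ta tb Hta Htb Hba Hbb) as HT.
    set (x := A tb / B tb). set (y := A ta / B ta).
    assert (Hx : A tb = x * B tb) by (unfold x; field; lra).
    assert (Hy : A ta = y * B ta) by (unfold y; field; lra).
    rewrite Hx, Hy in HT.
    assert (0 <= B ta * B tb * (x - y)) by lra.
    assert (B ta * B tb < 0) by nra. nra. }
  destruct (completeness E) as [k [Hk1 Hk2]].
  { exists (A sa / B sa). intros tau Ht. apply (UB sa Hsa HBa tau Ht). }
  { exists (A sb / B sb). exists sb. auto. }
  destruct (HS (k * (-a2) - a1, k * a1 - a2)) as [s [Hs Hd]].
  { intro H. injection H as H2 H3.
    assert (H0 : (k * (-a2) - a1) * a1 + (k * a1 - a2) * a2 = - N) by (unfold N; ring).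
    rewrite H2, H3 in H0. lra. }
  assert (Hd' : k * B s - A s > 0) by (unfold dotd in Hd; simpl in Hd; unfold A, B; lra).
  destruct (Rtotal_order (B s) 0) as [Hlt|[Heq|Hgt]].
  - assert (E (A s / B s)) by (exists s; auto).
    apply Hk1 in H.
    assert (A s = (A s / B s) * B s) by (field; lra). nra.
  - rewrite Heq in Hd'. pose proof (nC s Hs Heq). lra.
  - assert (k <= A s / B s).
    { apply Hk2. intros tau Ht. apply (UB s Hs Hgt tau Ht). }
    assert (A s = (A s / B s) * B s) by (field; lra). nra.
Qed.

Lemma onb_char (S : ptset) (p : pt) : S p ->
  (on_boundary (conv S) p <-> exists u, u <> (0,0) /\ forall s, S s -> dotd u s p <= 0).
Proof.
  intro Hp. split.
  - intros [_ Hni]. apply NNPP. intro Hno. apply Hni. apply surr_int.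
    intros u Hu. apply NNPP. intro Hno2. apply Hno. exists u. split; auto.
    intros s Hs. apply Rnot_lt_le. intro Hc. apply Hno2. exists s. auto.
  - intros [u [Hu Hs]]. split.
    + intros e He. exists p. split; [apply conv_S; auto|].
      unfold dist2. replace (fst p - fst p) with 0 by ring. replace (snd p - snd p) with 0 by ring. nra.
    + intro Hi. destruct (interior_surr S p Hi u Hu) as [s [Hs1 Hs2]].
      specialize (Hs s Hs1). lra.
Qed.

Definition inC (O x y v : pt) : Prop := dotd v y x <= 0 /\ dotd v (refl_pt O y) x <= 0.

Lemma two_half (g1 g2 : pt) : exists v, v <> (0,0) /\
  fst v * fst g1 + snd v * snd g1 <= 0 /\ fst v * fst g2 + snd v * snd g2 <= 0.
Proof.
  destruct g1 as [x1 y1], g2 as [x2 y2]; simpl.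
  destruct (Req_dec x1 0) as [Ex|Ex]; [destruct (Req_dec y1 0) as [Ey|Ey]|].
  - subst. destruct (Req_dec x2 0) as [Ex2|Ex2]; [destruct (Req_dec y2 0) as [Ey2|Ey2]|].
    + subst. exists (1,0). split; [intro H; injection H; lra|]. simpl; lra.
    + exists (-x2,-y2). split; [intro H; injection H; lra|]. simpl; nra.
    + exists (-x2,-y2). split; [intro H; injection H; lra|]. simpl; nra.
  - destruct (Rle_dec (-y1 * x2 + x1 * y2) 0).
    + exists (-y1, x1). split; [intro H; injection H; lra|]. simpl; nra.
    + exists (y1, -x1). split; [intro H; injection H; lra|]. simpl; nra.
  - destruct (Rle_dec (-y1 * x2 + x1 * y2) 0).
    + exists (-y1, x1). split; [intro H; injection H; lra|]. simpl; nra.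
    + exists (y1, -x1). split; [intro H; injection H; lra|]. simpl; nra.
Qed.

Lemma single_C (O x y : pt) : exists v, v <> (0,0) /\ inC O x y v.
Proof.
  destruct (two_half (fst y - fst x, snd y - snd x)
               (fst (refl_pt O y) - fst x, snd (refl_pt O y) - snd x)) as [v [Hv [H1 H2]]].
  exists v. split; auto. unfold inC, dotd. simpl in *. lra.
Qed.

Lemma inC_x (O x y v : pt) : inC O x y v -> inC O x x v.
Proof.
  unfold inC, dotd, refl_pt. destruct O, x, y, v; simpl. lra.
Qed.

Lemma pairwise (X : ptset) (O : pt)
  (H : forall Y : ptset, subset Y X -> card3 Y -> M Y O) x a b :
  X x -> X a -> X b -> exists v, v <> (0,0) /\ inC O x a v /\ inC O x b v.
Proof.
  intros Hx Ha Hb.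
  destruct (classic (a = b)) as [<-|Hab].
  { destruct (single_C O x a) as [v [Hv Hc]]. eauto. }
  destruct (classic (x = a)) as [<-|Hxa].
  { destruct (single_C O x b) as [v [Hv Hc]]. exists v. split; [auto|split; [apply (inC_x O x b v Hc)|auto]]. }
  destruct (classic (x = b)) as [<-|Hxb].
  { destruct (single_C O x a) as [v [Hv Hc]]. exists v. split; [auto|split; [auto|apply (inC_x O x a v Hc)]]. }
  set (Y := fun z => z = x \/ z = a \/ z = b).
  assert (HY : M Y O).
  { apply H.
    - intros z [->|[->| ->]]; auto.
    - exists x, a, b. repeat split; auto; intros z Hz; auto. }
  unfold M, admissible_center, convex_position in HY.
  assert (Hxz : set_union Y (refl_set Y O) x) by (left; left; auto).
  apply (onb_char _ _ Hxz) in HY; auto.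
  destruct HY as [u [Hu Hs]]. exists u. split; auto. unfold inC. repeat split.
  - apply Hs. left. right; left; auto.
  - apply Hs. right. exists a. split; auto. right; left; auto.
  - apply Hs. left. right; right; auto.
  - apply Hs. right. exists b. split; auto. right; right; auto.
Qed.

Lemma ival (X2 a b tau : R) : 0 < X2 -> b <> 0 ->
  ((X2 - a) - tau * b >= 0 /\ (X2 + a) + tau * b >= 0 <->
   Rmin ((X2 - a) / b) (- (X2 + a) / b) <= tau <= Rmax ((X2 - a) / b) (- (X2 + a) / b)).
Proof.
  intros HX Hb. set (e1 := (X2 - a) / b). set (e2 := - (X2 + a) / b).
  assert (E1 : e1 * b = X2 - a) by (unfold e1; field; auto).
  assert (E2 : e2 * b = - (X2 + a)) by (unfold e2; field; auto).
  destruct (Rtotal_order b 0) as [Hn|[Hz|Hp]]; [|contradiction|].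
  - assert (e1 <= e2) by nra.
    rewrite Rmin_left, Rmax_right by auto.
    split; intros [H1 H2]; split; nra.
  - assert (e2 <= e1) by nra.
    rewrite Rmin_right, Rmax_left by auto.
    split; intros [H1 H2]; split; nra.
Qed.

Lemma helly (X : ptset) (O x : pt) : X x ->
  (forall a b, X a -> X b -> exists v, v <> (0,0) /\ inC O x a v /\ inC O x b v) ->
  exists v, v <> (0,0) /\ forall y, X y -> inC O x y v.
Proof.
  intros Hx HP. unfold inC, dotd, refl_pt in *.
  destruct O as [o1 o2], x as [x1 x2]. simpl in *.
  set (p1 := x1 - o1). set (p2 := x2 - o2).
  set (X2 := p1*p1 + p2*p2).
  set (ay := fun y : pt => p1 * (fst y - o1) + p2 * (snd y - o2)).
  set (by_ := fun y : pt => - p2 * (fst y - o1) + p1 * (snd y - o2)).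
  assert (Id1 : forall w1 w2 y, X2 * (w1 * (fst y - x1) + w2 * (snd y - x2)) =
            (w1*p1 + w2*p2) * (ay y - X2) + (- w1 * p2 + w2 * p1) * by_ y).
  { intros. unfold X2, ay, by_, p1, p2. ring. }
  assert (Id2 : forall w1 w2 y, X2 * (w1 * (2 * o1 - fst y - x1) + w2 * (2 * o2 - snd y - x2)) =
            (w1*p1 + w2*p2) * (- ay y - X2) - (- w1 * p2 + w2 * p1) * by_ y).
  { intros. unfold X2, ay, by_, p1, p2. ring. }
  assert (Iw1 : forall w1 w2, X2 * w1 = p1 * (w1*p1 + w2*p2) - p2 * (- w1 * p2 + w2 * p1)).
  { intros. unfold X2. ring. }
  assert (Iw2 : forall w1 w2, X2 * w2 = p2 * (w1*p1 + w2*p2) + p1 * (- w1 * p2 + w2 * p1)).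
  { intros. unfold X2. ring. }
  destruct (Req_dec X2 0) as [HX0|HXp].
  {
    assert (Hp : p1 = 0 /\ p2 = 0) by (unfold X2 in HX0; split; nra).
    destruct Hp as [Hp1 Hp2].
    assert (Ex1 : x1 = o1) by (unfold p1 in Hp1; lra).
    assert (Ex2 : x2 = o2) by (unfold p2 in Hp2; lra).
    subst x1 x2.
    destruct (classic (exists y0, X y0 /\ (fst y0 - o1 <> 0 \/ snd y0 - o2 <> 0))) as [[y0 [Hy0 Hnz]]|Hall].
    - set (q1 := fst y0 - o1) in *. set (q2 := snd y0 - o2) in *.
      exists (-q2, q1). split.
      { intro H; injection H as H1 H2. destruct Hnz; lra. }
      intros y Hy. simpl.
      destruct (HP y0 y Hy0 Hy) as [[w1 w2] [Hw [[A1 A2] [B1 B2]]]]. simpl in *.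
      assert (Hq : w1 * q1 + w2 * q2 = 0) by (unfold q1, q2; lra).
      assert (Hyy : w1 * (fst y - o1) + w2 * (snd y - o2) = 0) by lra.
      set (z1 := fst y - o1) in *. set (z2 := snd y - o2) in *.
      assert (Hd1 : w1 * (q1 * z2 - q2 * z1) = 0).
      { replace (w1 * (q1 * z2 - q2 * z1)) with ((w1*q1) * z2 - q2 * (w1 * z1)) by ring.
        replace (w1*q1) with (- (w2 * q2)) by lra. replace (w1 * z1) with (- (w2 * z2)) by lra. ring. }
      assert (Hd2 : w2 * (q1 * z2 - q2 * z1) = 0).
      { replace (w2 * (q1 * z2 - q2 * z1)) with (q1 * (w2 * z2) - (w2*q2) * z1) by ring.
        replace (w2*q2) with (- (w1 * q1)) by lra. replace (w2 * z2) with (- (w1 * z1)) by lra. ring. }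
      assert (Hdet : q1 * z2 - q2 * z1 = 0).
      { destruct (Req_dec w1 0) as [Hw1|Hw1].
        - destruct (Req_dec w2 0) as [Hw2|Hw2].
          + subst. contradiction.
          + apply Rmult_integral in Hd2. destruct Hd2; [contradiction|auto].
        - apply Rmult_integral in Hd1. destruct Hd1; [contradiction|auto]. }
      split.
      + replace (fst y - o1) with z1 by reflexivity. replace (snd y - o2) with z2 by reflexivity. lra.
      + replace (2 * o1 - fst y - o1) with (- z1) by (unfold z1; ring).
        replace (2 * o2 - snd y - o2) with (- z2) by (unfold z2; ring). lra.
    - exists (1,0). split; [intro H; injection H; lra|].
      intros y Hy. simpl.
      assert (fst y - o1 = 0 /\ snd y - o2 = 0).
      { destruct (Req_dec (fst y - o1) 0); destruct (Req_dec (snd y - o2) 0); auto;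
        exfalso; apply Hall; exists y; auto. }
      split; lra. }
  assert (HX : 0 < X2) by (unfold X2 in *; nra).
  destruct (classic (exists y0, X y0 /\ by_ y0 = 0 /\ ay y0 * ay y0 > X2 * X2)) as [[y0 [Hy0 [Hb0 Ha0]]]|nL].
  {
    exists (-p2, p1). split.
    { intro H; injection H as H1 H2. unfold X2 in HX. nra. }
    intros y Hy. simpl.
    destruct (HP y0 y Hy0 Hy) as [[w1 w2] [Hw [[A1 A2] [B1 B2]]]]. simpl in *.
    set (S := w1*p1 + w2*p2) in *. set (T := - w1 * p2 + w2 * p1) in *.
    assert (C1 := Id1 w1 w2 y0). assert (C2 := Id2 w1 w2 y0).
    assert (D1 := Id1 w1 w2 y). assert (D2 := Id2 w1 w2 y).
    fold S T in C1, C2, D1, D2.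
    rewrite Hb0 in C1, C2.
    assert (S * (ay y0 - X2) <= 0) by nra.
    assert (S * (- ay y0 - X2) <= 0) by nra.
    assert (HS0 : S = 0).
    { destruct (Rtotal_order S 0) as [Hn|[Hz|Hp]]; auto.
      - assert (ay y0 - X2 >= 0) by nra. assert (- ay y0 - X2 >= 0) by nra. nra.
      - assert (ay y0 - X2 <= 0) by nra. assert (- ay y0 - X2 <= 0) by nra. nra. }
    assert (HT0 : T <> 0).
    { intro HT. apply Hw. pose proof (Iw1 w1 w2) as W1. pose proof (Iw2 w1 w2) as W2.
      fold S T in W1, W2. rewrite HS0, HT in W1, W2.
      f_equal; nra. }
    rewrite HS0 in D1, D2.
    assert (T * by_ y <= 0) by nra.
    assert (- (T * by_ y) <= 0) by nra.
    assert (Hby : by_ y = 0).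
    { assert (T * by_ y = 0) by lra. apply Rmult_integral in H3. destruct H3; [contradiction|auto]. }
    unfold by_ in Hby. unfold p1, p2 in *. split; nra. }
  assert (nL' : forall y, X y -> by_ y = 0 -> ay y * ay y <= X2 * X2).
  { intros y Hy Hb. apply Rnot_lt_le. intro Hc. apply nL. exists y. auto. }
  clear nL.
  assert (Vid1 : forall k y, (p1 + k * - p2) * (fst y - x1) + (p2 + k * p1) * (snd y - x2)
                  = ay y - X2 + k * by_ y).
  { intros. unfold ay, by_, X2, p1, p2. ring. }
  assert (Vid2 : forall k y, (p1 + k * - p2) * (2 * o1 - fst y - x1) + (p2 + k * p1) * (2 * o2 - snd y - x2)
                  = - ay y - X2 - k * by_ y).
  { intros. unfold ay, by_, X2, p1, p2. ring. }
  assert (Vnz : forall k, (p1 + k * - p2, p2 + k * p1) <> (0,0)).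
  { intros k H. injection H as H1 H2.
    assert ((p1 + k * - p2) * p1 + (p2 + k * p1) * p2 = X2) by (unfold X2; ring).
    rewrite H1, H2 in H. lra. }
  destruct (classic (exists y1, X y1 /\ by_ y1 <> 0)) as [[y1 [Hy1 Hb1]]|nB].
  2:{ exists (p1 + 0 * - p2, p2 + 0 * p1). split; [apply Vnz|].
      intros y Hy. simpl. rewrite Vid1, Vid2.
      assert (by_ y = 0).
      { apply NNPP. intro Hc. apply nB. exists y. auto. }
      pose proof (nL' y Hy H). rewrite H. split; nra. }
  set (lo := fun y => Rmin ((X2 - ay y) / by_ y) (- (X2 + ay y) / by_ y)).
  set (hi := fun y => Rmax ((X2 - ay y) / by_ y) (- (X2 + ay y) / by_ y)).
  assert (PW : forall y y2, X y -> X y2 -> by_ y <> 0 -> by_ y2 <> 0 ->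
            lo y <= hi y2).
  { intros y y2 Hy Hy2 Hb Hb2.
    destruct (HP y y2 Hy Hy2) as [[w1 w2] [Hw [[A1 A2] [B1 B2]]]]. simpl in *.
    set (S := w1*p1 + w2*p2) in *. set (T := - w1 * p2 + w2 * p1) in *.
    assert (C1 := Id1 w1 w2 y). assert (C2 := Id2 w1 w2 y).
    assert (D1 := Id1 w1 w2 y2). assert (D2 := Id2 w1 w2 y2).
    fold S T in C1, C2, D1, D2.
    assert (F1 : S * (X2 - ay y) - T * by_ y >= 0) by nra.
    assert (F2 : S * (X2 + ay y) + T * by_ y >= 0) by nra.
    assert (G1 : S * (X2 - ay y2) - T * by_ y2 >= 0) by nra.
    assert (G2 : S * (X2 + ay y2) + T * by_ y2 >= 0) by nra.
    assert (HS : 0 < S).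
    { destruct (Rtotal_order S 0) as [Hn|[Hz|Hp]]; auto.
      - exfalso. nra.
      - exfalso. rewrite Hz in F1, F2.
        assert (T * by_ y = 0) by lra.
        apply Rmult_integral in H. destruct H as [HT|]; [|contradiction].
        apply Hw. pose proof (Iw1 w1 w2) as W1. pose proof (Iw2 w1 w2) as W2.
        fold S T in W1, W2. rewrite Hz, HT in W1, W2. f_equal; nra. }
    set (tau := T / S).
    assert (HT : T = tau * S) by (unfold tau; field; lra).
    rewrite HT in F1, F2, G1, G2.
    assert (I1 : (X2 - ay y) - tau * by_ y >= 0 /\ (X2 + ay y) + tau * by_ y >= 0) by (split; nra).
    assert (I2 : (X2 - ay y2) - tau * by_ y2 >= 0 /\ (X2 + ay y2) + tau * by_ y2 >= 0) by (split; nra).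
    apply (ival X2 (ay y) (by_ y) tau HX Hb) in I1.
    apply (ival X2 (ay y2) (by_ y2) tau HX Hb2) in I2.
    unfold lo, hi. lra. }
  set (E := fun tau => exists y, X y /\ by_ y <> 0 /\ tau = lo y).
  destruct (completeness E) as [k [Hk1 Hk2]].
  { exists (hi y1). intros tau [y [Hy [Hb ->]]]. apply PW; auto. }
  { exists (lo y1). exists y1. auto. }
  exists (p1 + k * - p2, p2 + k * p1). split; [apply Vnz|].
  intros y Hy. simpl. rewrite Vid1, Vid2.
  destruct (Req_dec (by_ y) 0) as [Hb|Hb].
  - pose proof (nL' y Hy Hb). rewrite Hb. split; nra.
  - assert (lo y <= k) by (apply Hk1; exists y; auto).
    assert (k <= hi y).
    { apply Hk2. intros tau [y' [Hy' [Hb' ->]]]. apply PW; auto. }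
    assert (Hi : lo y <= k <= hi y) by lra.
    unfold lo, hi in Hi. apply (ival X2 (ay y) (by_ y) k HX Hb) in Hi.
    lra.
Qed.

Theorem mainTheorem5 (X : ptset) (hX : convex_position X) :
  forall O : pt, M X O <-> (forall Y : ptset, subset Y X -> card3 Y -> M Y O).
Proof.
  intros O. split.
  - intros HM Y HYX _. unfold M, admissible_center, convex_position in *.
    intros q Hq.
    assert (HqX : set_union X (refl_set X O) q).
    { destruct Hq as [Hq|[y [Hy ->]]]; [left; auto|right; exists y; auto]. }
    apply (onb_char _ _ HqX) in HM; auto.
    apply (onb_char _ _ Hq). destruct HM as [u [Hu Hs]]. exists u. split; auto.
    intros s Hs'. apply Hs. destruct Hs' as [Hs'|[y [Hy ->]]]; [left; auto|right; exists y; auto].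
  - intros H. unfold M, admissible_center, convex_position.
    intros q Hq. apply (onb_char _ _ Hq).
    destruct Hq as [Hx|[x [Hx ->]]].
    + destruct (helly X O q Hx (fun a b Ha Hb => pairwise X O H q a b Hx Ha Hb)) as [v [Hv Hall]].
      exists v. split; auto. intros s [Hs|[y [Hy ->]]]; apply Hall in Hy || apply Hall in Hs.
      * destruct Hs; auto.
      * destruct Hy; auto.
    + destruct (helly X O x Hx (fun a b Ha Hb => pairwise X O H x a b Hx Ha Hb)) as [[v1 v2] [Hv Hall]].
      exists (-v1, -v2). split.
      { intro E. injection E as E1 E2. apply Hv. f_equal; lra. }
      intros s [Hs|[y [Hy ->]]].
      * destruct (Hall s Hs) as [A1 A2]. unfold dotd, refl_pt in *. simpl in *. lra.
      * destruct (Hall y Hy) as [A1 A2]. unfold dotd, refl_pt in *. simpl in *. lra.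
Qed.
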